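(* Let $\Gamma\subseteq\mathbb R^n$ be an open convex set, $S\subseteq\Gamma$ a nonempty convex set, and $f:\Gamma\to\mathbb R$ a Fréchet differentiable function that is quasiconvex on $\Gamma$. Let $\bar S=\arg\min\{f(x)\mid x\in S\}$, and let $x,y\in\bar S$ with $\nabla f(x)\neq 0$ and $\nabla f(y)\neq 0$. Then for every $d\in\mathbb R^n$, \[ \nabla f(x)^T d<0\quad\Longrightarrow\quad \nabla f(y)^T d\le 0 . \]
   Context: A function $f:\Gamma\to\mathbb R$ on a convex set $\Gamma\subseteq\mathbb R^n$ is quasiconvex on $\Gamma$ iff $f(x+t(y-x))\le\max\{f(x),f(y)\}$ for all $x,y\in\Gamma$ and $t\in[0,1]$. $\bar S$ denotes the solution set of the problem of minimizing $f$ over $S$. *)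

(* Defs.v *)
From mathcomp Require Import all_boot.
From Stdlib Require Import Reals.
Set Implicit Arguments.
Unset Strict Implicit.
Unset Printing Implicit Defensive.
Local Open Scope R_scope.

Definition vec (n : nat) := 'I_n -> R.

Definition vadd {n} (x y : vec n) : vec n := fun i => (x i + y i).
Definition vsub {n} (x y : vec n) : vec n := fun i => (x i - y i).
Definition vscale {n} (t : R) (x : vec n) : vec n := fun i => (t * x i).
Definition vzero {n} : vec n := fun _ => 0.

Definition dot {n} (x y : vec n) : R := \big[Rplus/0]_(i < n) (x i * y i).
Definition vnorm {n} (x : vec n) : R := sqrt (dot x x).

Definition open_in_Rn {n} (G : vec n -> Prop) : Prop :=
  forall x, G x -> exists r, (0 < r) /\
    forall y, (vnorm (vsub y x) < r) -> G y.

Definition convex_in_Rn {n} (G : vec n -> Prop) : Prop :=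
  forall x y t, G x -> G y -> (0 <= t <= 1) ->
    G (vadd x (vscale t (vsub y x))).

Definition quasiconvex_on {n} (G : vec n -> Prop) (f : vec n -> R) : Prop :=
  forall x y t, G x -> G y -> (0 <= t <= 1) ->
    (f (vadd x (vscale t (vsub y x))) <= Rmax (f x) (f y)).

Definition frechet_grad {n} (f : vec n -> R) (x g : vec n) : Prop :=
  forall eps, (0 < eps) -> exists delta, (0 < delta) /\
    forall h, (0 < vnorm h < delta) ->
      (Rabs (f (vadd x h) - f x - dot g h) <= eps * vnorm h).

Definition argmin_on {n} (f : vec n -> R) (S : vec n -> Prop) (x : vec n) : Prop :=
  S x /\ forall z, S z -> (f x <= f z).

(* Main.v *)
Require Import Defs.
From mathcomp Require Import all_boot.
From Stdlib Require Import Reals Lra FunctionalExtensionality.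
Set Implicit Arguments.
Unset Strict Implicit.
Open Scope R_scope.
From HB Require Import structures.

Lemma RplusA_ssr : associative Rplus.
Proof. by move=> a b c; rewrite Rplus_assoc. Qed.
HB.instance Definition _ := Monoid.isComLaw.Build R 0 Rplus RplusA_ssr Rplus_comm Rplus_0_l.

Lemma sumR_lin n (F G : 'I_n -> R) c :
  \big[Rplus/0]_(i < n) (F i + c * G i) =
  \big[Rplus/0]_(i < n) F i + c * \big[Rplus/0]_(i < n) G i.
Proof.
elim: n F G => [|n IH] F G; first by rewrite !big_ord0 /=; lra.
rewrite !big_ord_recr /= IH.
set A := (\big[Rplus/0]_(i < n) F (widen_ord (leqnSn n) i)).
set B := (\big[Rplus/0]_(i < n) G (widen_ord (leqnSn n) i)).
ring.
Qed.

Lemma sumR_scale n (G : 'I_n -> R) c :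
  \big[Rplus/0]_(i < n) (c * G i) = c * \big[Rplus/0]_(i < n) G i.
Proof.
elim: n G => [|n IH] G; first by rewrite !big_ord0 /=; lra.
rewrite !big_ord_recr /= IH.
set B := (\big[Rplus/0]_(i < n) G (widen_ord (leqnSn n) i)).
ring.
Qed.

Lemma sumR_nonneg n (F : 'I_n -> R) : (forall i, 0 <= F i) ->
  0 <= \big[Rplus/0]_(i < n) F i /\
  (\big[Rplus/0]_(i < n) F i = 0 -> forall i, F i = 0).
Proof.
elim: n F => [|n IH] F HF.
  rewrite big_ord0; split; first lra.
  by move=> _ [].
rewrite big_ord_recr /=.
have [H1 H2] := IH (fun i => F (widen_ord (leqnSn n) i)) (fun i => HF _).
have H3 := HF ord_max.
set A := (\big[Rplus/0]_(i < n) F (widen_ord (leqnSn n) i)) in H1 H2 *.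
split; first lra.
move=> Hs i.
have E1 : A = 0 by lra.
have E2 : F ord_max = 0 by lra.
case: (unliftP ord_max i) => [j ->|->]; last exact: E2.
have := H2 E1 j.
suff -> : lift ord_max j = widen_ord (leqnSn n) j by [].
by apply: val_inj => /=; rewrite /bump leqNgt ltn_ord.
Qed.

Lemma dot_nonneg n (k : vec n) : 0 <= dot k k.
Proof.
have [H _] := @sumR_nonneg n (fun i => k i * k i) (fun i => Rle_0_sqr (k i)).
exact H.
Qed.

Lemma vnorm_nonneg n (k : vec n) : 0 <= vnorm k.
Proof. apply sqrt_pos. Qed.

Lemma vnorm0_dot n (g k : vec n) : vnorm k = 0 -> dot g k = 0.
Proof.
move=> Hk.
have Hd : dot k k = 0.
  apply: sqrt_eq_0; [exact: dot_nonneg | exact Hk].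
have [_ H] := @sumR_nonneg n (fun i => k i * k i) (fun i => Rle_0_sqr (k i)).
have Hz : forall i, k i = 0 by move=> i; have := H Hd i; nra.
rewrite /dot (eq_bigr (fun i => 0 * g i)); last by move=> i _; rewrite Hz; ring.
rewrite sumR_scale; ring.
Qed.

Lemma vnorm_scale n s (k : vec n) : 0 <= s -> vnorm (vscale s k) = s * vnorm k.
Proof.
move=> Hs; rewrite /vnorm.
have -> : dot (vscale s k) (vscale s k) = (s * s) * dot k k.
  rewrite /dot -sumR_scale; apply: eq_bigr => i _; rewrite /vscale; ring.
rewrite sqrt_mult_alt; last nra.
by rewrite sqrt_square.
Qed.

Lemma dot_scale n (g k : vec n) s : dot g (vscale s k) = s * dot g k.
Proof.
rewrite /dot -sumR_scale; apply: eq_bigr => i _; rewrite /vscale; ring.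
Qed.

Lemma core n f (y g k : vec n) : frechet_grad f y g -> 0 < vnorm k ->
  forall eps m, 0 < eps -> 0 < m -> exists s, 0 < s <= m /\
   Rabs (f (vadd y (vscale s k)) - f y - s * dot g k) <= eps * (s * vnorm k).
Proof.
move=> Hf Hk eps m He Hm.
have [delta [Hd H]] := Hf eps He.
set s := Rmin m (delta / (2 * vnorm k)).
have Hs0 : 0 < s.
  apply: Rmin_glb_lt => //; apply: Rdiv_lt_0_compat; lra.
have Hs1 : s <= delta / (2 * vnorm k) by apply: Rmin_r.
exists s; split; first split => //; first exact: Rmin_l.
have Hn := @vnorm_scale n s k (Rlt_le _ _ Hs0).
rewrite -dot_scale -Hn; apply: H.
rewrite Hn; split; first nra.
have : s * (2 * vnorm k) <= delta.
  have := Rmult_le_compat_r (2 * vnorm k) _ _ ltac:(lra) Hs1.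
  by rewrite /Rdiv Rmult_assoc Rinv_l; lra.
lra.
Qed.

Lemma dir_le n f (y g k : vec n) : frechet_grad f y g ->
  (forall s, 0 < s <= 1 -> f (vadd y (vscale s k)) <= f y) -> dot g k <= 0.
Proof.
move=> Hf Hle.
have [Hk|Hk] := Req_dec (vnorm k) 0; first by rewrite vnorm0_dot //; lra.
have Hk' : 0 < vnorm k by have := vnorm_nonneg k; lra.
apply: Rnot_lt_le => Hpos.
have He : 0 < dot g k / (2 * vnorm k) by apply: Rdiv_lt_0_compat; lra.
have [s [[Hs0 Hs1] H]] := core Hf Hk' He Rlt_0_1.
have E : dot g k / (2 * vnorm k) * (s * vnorm k) = s * dot g k / 2.
  field; lra.
rewrite E in H.
have := Hle s (conj Hs0 Hs1).
have := Rle_abs (- (f (vadd y (vscale s k)) - f y - s * dot g k)).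
rewrite Rabs_Ropp; nra.
Qed.

Lemma dir_ge n f (y g k : vec n) : frechet_grad f y g ->
  (forall s, 0 < s <= 1 -> f y <= f (vadd y (vscale s k))) -> 0 <= dot g k.
Proof.
move=> Hf Hle.
have [Hk|Hk] := Req_dec (vnorm k) 0; first by rewrite vnorm0_dot //; lra.
have Hk' : 0 < vnorm k by have := vnorm_nonneg k; lra.
apply: Rnot_lt_le => Hneg.
have He : 0 < - dot g k / (2 * vnorm k) by apply: Rdiv_lt_0_compat; lra.
have [s [[Hs0 Hs1] H]] := core Hf Hk' He Rlt_0_1.
have E : - dot g k / (2 * vnorm k) * (s * vnorm k) = - (s * dot g k) / 2.
  field; lra.
rewrite E in H.
have := Hle s (conj Hs0 Hs1).
have := Rle_abs (f (vadd y (vscale s k)) - f y - s * dot g k).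
nra.
Qed.

Unset Implicit Arguments.
Set Strict Implicit.
Theorem lemma3 (n : nat) (Gam S : vec n -> Prop) (f : vec n -> R)
  (grad : vec n -> vec n)
  (hGopen : open_in_Rn Gam) (hGconv : convex_in_Rn Gam)
  (hSsub : forall z, S z -> Gam z) (hSne : exists z, S z) (hSconv : convex_in_Rn S)
  (hdiff : forall z, Gam z -> frechet_grad f z (grad z))
  (hqc : quasiconvex_on Gam f)
  (x y : vec n) (hx : argmin_on f S x) (hy : argmin_on f S y)
  (hgx : grad x <> vzero) (hgy : grad y <> vzero) :
  forall d : vec n, (dot (grad x) d < 0) -> (dot (grad y) d <= 0).
Proof.
move=> d Hd.
case: hx => Sx hx; case: hy => Sy hy.
have Gx := hSsub _ Sx; have Gy := hSsub _ Sy.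
have Hxy : f x = f y by have := hx _ Sy; have := hy _ Sx; lra.
have H0 : 0 <= dot (grad y) (vsub x y).
  apply: (dir_ge (hdiff _ Gy)) => s Hs.
  apply: hy; apply: hSconv => //; lra.
have [Hk|Hk] := Req_dec (vnorm d) 0.
  by rewrite vnorm0_dot in Hd; lra.
have Hk' : 0 < vnorm d by have := vnorm_nonneg d; lra.
have [r [Hr HG]] := hGopen _ Gx.
have He : 0 < - dot (grad x) d / (2 * vnorm d) by apply: Rdiv_lt_0_compat; lra.
have Hm : 0 < r / (2 * vnorm d) by apply: Rdiv_lt_0_compat; lra.
have [s [[Hs0 Hs1] H]] := core (hdiff _ Gx) Hk' He Hm.
have E : - dot (grad x) d / (2 * vnorm d) * (s * vnorm d) = - (s * dot (grad x) d) / 2.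
  field; lra.
rewrite E in H.
set z := vadd x (vscale s d).
have Hfz : f z <= f y.
  have := Rle_abs (f z - f x - s * dot (grad x) d); rewrite /z; nra.
have Gz : Gam z.
  apply: HG.
  have -> : vsub z x = vscale s d.
    by apply: functional_extensionality => i; rewrite /z /vsub /vadd /vscale; ring.
  rewrite vnorm_scale; last lra.
  have : s * (2 * vnorm d) <= r.
    have := Rmult_le_compat_r (2 * vnorm d) _ _ ltac:(lra) Hs1.
    by rewrite /Rdiv Rmult_assoc Rinv_l; lra.
  nra.
have Hq : dot (grad y) (vsub z y) <= 0.
  apply: (dir_le (hdiff _ Gy)) => t Ht.
  have := hqc y z t Gy Gz ltac:(lra).
  rewrite Rmax_left //.
have E2 : dot (grad y) (vsub z y) = dot (grad y) (vsub x y) + s * dot (grad y) d.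
  rewrite /dot -sumR_lin; apply: eq_bigr => i _.
  rewrite /z /vsub /vadd /vscale; ring.
rewrite E2 in Hq.
nra.
Qed.
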